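(* Let $P_1,\dots,P_a$ be orthogonal projectors on a finite-dimensional Hilbert space $B$. Suppose a finite group $G$ acts transitively on the labels $\{1,\dots,a\}$, $i\mapsto i^g$, and $g\mapsto U^g$ is a unitary representation of $G$ on $B$ such that $P_{i^g}=(U^g)^\dagger P_iU^g$ for all $i$ and $g\in G$. Let $B=\bigoplus_\lambda\mathcal{Q}_\lambda\otimes\mathcal{R}_\lambda$ be the isotypical decomposition of $U$, with $\mathcal{Q}_\lambda$ pairwise inequivalent irreducible representations and $\mathcal{R}_\lambda$ the multiplicity spaces; let $L$ be the number of terms $\lambda$ and $M=\max_\lambda\dim\mathcal{R}_\lambda$. If $$\frac{a}{\left\|\sum_{i=1}^aP_i\right\|_\infty}>16L^6M^9,$$ then there exists a POVM $(R_i)_{i=1}^a$ on $B$ (i.e. $R_i\ge0$, $\sum_iR_i=\mathbb{1}$) with $P_iR_i=0$ for all $i$. In particular, any set of states $\{\rho_i\}_{i=1}^a$ with $\mathrm{supp}\,\rho_i$ contained in the range of $P_i$ can be conclusively excluded.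
   Context: A set of states $\{\rho_i\}$ is conclusively excluded by a POVM $(R_i)$ indexed by the same labels if $\mathrm{tr}\,\rho_iR_i=0$ for all $i$. $\|\cdot\|_\infty$ is the operator norm. *)

(* Defs.v *)
From HB Require Import structures.
From mathcomp Require Import all_boot all_order all_algebra all_fingroup.
From mathcomp Require Import mxrepresentation.
From mathcomp Require Import complex.
From mathcomp Require Import boolp classical_sets reals.
Set Implicit Arguments. Unset Strict Implicit. Unset Printing Implicit Defensive.
Import Order.TTheory GRing.Theory Num.Theory.
Local Open Scope ring_scope.

(* Hilbert space B = C^n, operators = n x n complex matrices acting on
   column vectors 'cV_n.  Conjugate transpose: *)
Definition adjmx (R : realType) m n (A : 'M[R[i]]_(m, n)) : 'M[R[i]]_(n, m) :=
  (map_mx Num.conj A)^T.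

Definition vnorm (R : realType) n (v : 'cV[R[i]]_n) : R :=
  Num.sqrt (\sum_(k < n) ((complex.Re (v k 0)) ^+ 2 + (complex.Im (v k 0)) ^+ 2)).

Definition opnorm (R : realType) n (A : 'M[R[i]]_n) : R :=
  sup [set vnorm (A *m v) | v in [set v : 'cV[R[i]]_n | vnorm v = 1]]%classic.

Definition orth_projector (R : realType) n (P : 'M[R[i]]_n) : Prop :=
  adjmx P = P /\ P *m P = P.

Definition psd (R : realType) n (A : 'M[R[i]]_n) : Prop :=
  adjmx A = A /\ forall v : 'cV[R[i]]_n, 0 <= (adjmx v *m A *m v) 0 0.

Definition unitary (R : realType) n (U : 'M[R[i]]_n) : Prop :=
  adjmx U *m U = 1%:M /\ U *m adjmx U = 1%:M.

Definition POVM (R : realType) n a (Rm : 'I_a -> 'M[R[i]]_n) : Prop :=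
  (forall i, psd (Rm i)) /\ \sum_(i < a) Rm i = 1%:M.

(* Main.v *)
Require Import Defs.
From HB Require Import structures.
From mathcomp Require Import all_boot all_order all_algebra all_fingroup.
From mathcomp Require Import mxrepresentation.
From mathcomp Require Import complex.
From mathcomp Require Import boolp classical_sets reals.
From mathcomp Require Import ring lra.
Set Implicit Arguments. Unset Strict Implicit. Unset Printing Implicit Defensive.
Import Order.TTheory GRing.Theory Num.Theory.
Local Open Scope complex_scope.
Local Open Scope ring_scope.


Section Basic.
Variable R : realType.
Local Notation C := R[i].

Lemma adjmxE m n (A : 'M[C]_(m, n)) i j : adjmx A i j = (A j i)^*.
Proof. by rewrite /adjmx !mxE. Qed.

Lemma adjmxK m n (A : 'M[C]_(m, n)) : adjmx (adjmx A) = A.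
Proof. by apply/matrixP=> i j; rewrite !adjmxE conjCK. Qed.

Lemma adjmxM m n p (A : 'M[C]_(m, n)) (B : 'M[C]_(n, p)) :
  adjmx (A *m B) = adjmx B *m adjmx A.
Proof.
apply/matrixP=> i j; rewrite !adjmxE !mxE rmorph_sum; apply: eq_bigr => k _.
by rewrite !adjmxE rmorphM mulrC.
Qed.

Lemma adjmxD m n (A B : 'M[C]_(m, n)) : adjmx (A + B) = adjmx A + adjmx B.
Proof. by apply/matrixP=> i j; rewrite /adjmx !mxE rmorphD. Qed.

Lemma adjmxN m n (A : 'M[C]_(m, n)) : adjmx (- A) = - adjmx A.
Proof. by apply/matrixP=> i j; rewrite /adjmx !mxE rmorphN. Qed.

Lemma adjmxB m n (A B : 'M[C]_(m, n)) : adjmx (A - B) = adjmx A - adjmx B.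
Proof. by rewrite adjmxD adjmxN. Qed.

Lemma adjmxZ m n c (A : 'M[C]_(m, n)) : adjmx (c *: A) = c^* *: adjmx A.
Proof. by apply/matrixP=> i j; rewrite /adjmx !mxE rmorphM. Qed.

Lemma adjmx0 m n : adjmx (0 : 'M[C]_(m, n)) = 0.
Proof. by apply/matrixP=> i j; rewrite /adjmx !mxE conjC0. Qed.

Lemma adjmx_scalar n c : adjmx (c%:M : 'M[C]_n) = c^*%:M.
Proof.
apply/matrixP=> i j; rewrite /adjmx !mxE eq_sym.
by case: (j == i); rewrite ?mulr1n ?mulr0n ?conjC0 //= rmorphMn.
Qed.

Lemma adjmx1 n : adjmx (1%:M : 'M[C]_n) = 1%:M.
Proof. by rewrite adjmx_scalar conjC1. Qed.

Lemma adjmx_sum m n (I : finType) (F : I -> 'M[C]_(m, n)) :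
  adjmx (\sum_i F i) = \sum_i adjmx (F i).
Proof.
apply: (big_ind2 (fun x y => adjmx x = y)) => //; first exact: adjmx0.
by move=> x1 x2 y1 y2 <- <-; rewrite adjmxD.
Qed.

Definition ip n (x y : 'cV[C]_n) : C := (adjmx x *m y) 0 0.
Definition Nv n (x : 'cV[C]_n) : C := ip x x.

Lemma ipE n (x y : 'cV[C]_n) : ip x y = \sum_k (x k 0)^* * y k 0.
Proof. by rewrite /ip mxE; apply: eq_bigr => k _; rewrite adjmxE. Qed.

Lemma ipC n (x y : 'cV[C]_n) : ip y x = (ip x y)^*.
Proof.
rewrite !ipE rmorph_sum; apply: eq_bigr => k _.
by rewrite rmorphM /= conjCK mulrC.
Qed.

Lemma ipDr n (x y z : 'cV[C]_n) : ip x (y + z) = ip x y + ip x z.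
Proof. by rewrite /ip mulmxDr mxE. Qed.
Lemma ipDl n (x y z : 'cV[C]_n) : ip (x + y) z = ip x z + ip y z.
Proof. by rewrite /ip adjmxD mulmxDl mxE. Qed.
Lemma ipNr n (x y : 'cV[C]_n) : ip x (- y) = - ip x y.
Proof. by rewrite /ip mulmxN mxE. Qed.
Lemma ipNl n (x y : 'cV[C]_n) : ip (- x) y = - ip x y.
Proof. by rewrite /ip adjmxN mulNmx mxE. Qed.
Lemma ipZr n c (x y : 'cV[C]_n) : ip x (c *: y) = c * ip x y.
Proof. by rewrite /ip -scalemxAr mxE. Qed.
Lemma ipZl n c (x y : 'cV[C]_n) : ip (c *: x) y = c^* * ip x y.
Proof. by rewrite /ip adjmxZ -scalemxAl mxE. Qed.
Lemma ip0r n (x : 'cV[C]_n) : ip x 0 = 0.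
Proof. by rewrite /ip mulmx0 mxE. Qed.
Lemma ip0l n (x : 'cV[C]_n) : ip 0 x = 0.
Proof. by rewrite /ip adjmx0 mul0mx mxE. Qed.

Lemma ip_adj n (A : 'M[C]_n) (x y : 'cV[C]_n) :
  ip x (A *m y) = ip (adjmx A *m x) y.
Proof. by rewrite /ip adjmxM adjmxK mulmxA. Qed.

Lemma Nv_ge0 n (x : 'cV[C]_n) : 0 <= Nv x.
Proof.
rewrite /Nv ipE; apply: sumr_ge0 => k _; rewrite mulrC; exact: mul_conjC_ge0.
Qed.

Lemma Nv_eq0 n (x : 'cV[C]_n) : Nv x = 0 -> x = 0.
Proof.
rewrite /Nv ipE => /eqP; rewrite psumr_eq0; last first.
  by move=> k _; rewrite mulrC; exact: mul_conjC_ge0.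
move=> /allP H; apply/matrixP=> k j; rewrite (ord1 j) mxE.
have := H k (mem_index_enum _); rewrite /= mulrC mul_conjC_eq0.
by move/eqP.
Qed.

Lemma Nv_real n (x : 'cV[C]_n) : Nv x \is Num.real.
Proof. exact: ger0_real (Nv_ge0 x). Qed.

End Basic.


Section B.
Variable R : realType.
Local Notation C := R[i].

Lemma conjE (z : C) : Num.conj z = conjc z.
Proof. by case: z. Qed.

Lemma conj_realC (r : R) : Num.conj (r%:C : C) = r%:C.
Proof. by rewrite conjE /= oppr0. Qed.

Lemma cReD (x y : C) : complex.Re (x + y) = complex.Re x + complex.Re y.
Proof. by case: x; case: y. Qed.
Lemma cReN (x : C) : complex.Re (- x) = - complex.Re x.
Proof. by case: x. Qed.
Lemma cReB (x y : C) : complex.Re (x - y) = complex.Re x - complex.Re y.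
Proof. by rewrite cReD cReN. Qed.
Lemma cReMr (r : R) (z : C) : complex.Re (r%:C * z) = r * complex.Re z.
Proof. by case: z => a b /=; rewrite mul0r subr0. Qed.
Lemma cImMr (r : R) (z : C) : complex.Im (r%:C * z) = r * complex.Im z.
Proof. by case: z => a b /=; rewrite mul0r addr0. Qed.
Lemma cRe_sum (I : finType) (F : I -> C) : complex.Re (\sum_i F i) = \sum_i complex.Re (F i).
Proof.
apply: (big_ind2 (fun x y => complex.Re x = y)) => //.
by move=> x1 x2 y1 y2 <- <-; rewrite cReD.
Qed.
Lemma cIm_sum (I : finType) (F : I -> C) : complex.Im (\sum_i F i) = \sum_i complex.Im (F i).
Proof.
apply: (big_ind2 (fun x y => complex.Im x = y)) => //.
by move=> x1 x2 y1 y2 <- <-; case: x1; case: y1.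
Qed.

Lemma realCE (z : C) : Num.conj z = z -> z = (complex.Re z)%:C.
Proof.
case: z => a b; rewrite conjE /= => -[] h.
have -> : b = 0 by lra.
by [].
Qed.

Lemma leC_R (x y : R) : ((x%:C : C) <= y%:C) = (x <= y).
Proof. exact: lecR. Qed.

Definition herm n (A : 'M[C]_n) := adjmx A = A.
Definition q n (A : 'M[C]_n) (v : 'cV[C]_n) : C := ip v (A *m v).
Definition nr n (v : 'cV[C]_n) : R := complex.Re (Nv v).
Definition qr n (A : 'M[C]_n) (v : 'cV[C]_n) : R := complex.Re (q A v).

Lemma Nv_conj n (v : 'cV[C]_n) : Num.conj (Nv v) = Nv v.
Proof. by rewrite /Nv -ipC. Qed.

Lemma NvE n (v : 'cV[C]_n) : Nv v = (nr v)%:C.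
Proof. exact/realCE/Nv_conj. Qed.

Lemma nr_ge0 n (v : 'cV[C]_n) : 0 <= nr v.
Proof. by have := Nv_ge0 v; rewrite NvE lecR. Qed.

Lemma nr_eq0 n (v : 'cV[C]_n) : nr v = 0 -> v = 0.
Proof. by move=> h; apply: Nv_eq0; rewrite NvE h. Qed.

Lemma q_conj n (A : 'M[C]_n) v : herm A -> Num.conj (q A v) = q A v.
Proof.
move=> hA; rewrite /q -ipC.
by rewrite -{2}hA ip_adj adjmxK.
Qed.

Lemma qE n (A : 'M[C]_n) v : herm A -> q A v = (qr A v)%:C.
Proof. by move=> hA; apply/realCE/q_conj. Qed.

Lemma ip_sym_conj n (x y : 'cV[C]_n) : Num.conj (ip x y + ip y x) = ip x y + ip y x.
Proof. by rewrite rmorphD /= -!ipC addrC. Qed.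

Definition re2 n (x y : 'cV[C]_n) : R := complex.Re (ip x y + ip y x).

Lemma re2E n (x y : 'cV[C]_n) : ip x y + ip y x = (re2 x y)%:C.
Proof. exact/realCE/ip_sym_conj. Qed.

Lemma nrZ n (t : R) (x : 'cV[C]_n) : nr (t%:C *: x) = t ^+ 2 * nr x.
Proof.
by rewrite /nr /Nv ipZl ipZr conj_realC mulrA -cReMr expr2 -rmorphM.
Qed.

Lemma nrN n (x : 'cV[C]_n) : nr (- x) = nr x.
Proof. by rewrite /nr /Nv ipNl ipNr opprK. Qed.

Lemma nrD n (x y : 'cV[C]_n) : nr (x + y) = nr x + nr y + re2 x y.
Proof.
rewrite /nr /re2 /Nv ipDl !ipDr !cReD; lra.
Qed.

Lemma re2N n (x y : 'cV[C]_n) : re2 (- x) y = - re2 x y.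
Proof. by rewrite /re2 ipNl ipNr -opprD cReN. Qed.

Lemma re2C n (x y : 'cV[C]_n) : re2 x y = re2 y x.
Proof. by rewrite /re2 addrC. Qed.

Lemma re2Zl n (t : R) (x y : 'cV[C]_n) : re2 (t%:C *: x) y = t * re2 x y.
Proof. by rewrite /re2 ipZl ipZr conj_realC -mulrDr cReMr. Qed.

Lemma re2D n (x y z : 'cV[C]_n) : re2 (x + y) z = re2 x z + re2 y z.
Proof. rewrite /re2 ipDl ipDr !cReD; lra. Qed.

Lemma nrB n (x y : 'cV[C]_n) : nr (x - y) = nr x + nr y - re2 x y.
Proof. by rewrite nrD nrN re2C re2N re2C; lra. Qed.

Lemma amgm n (t : R) (x y : 'cV[C]_n) : 0 < t ->
  re2 x y <= t * nr x + t^-1 * nr y.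
Proof.
move=> t0; have := nr_ge0 (t%:C *: x - y).
rewrite nrB nrZ re2Zl => h.
have h1 : t * re2 x y <= t * (t * nr x + t^-1 * nr y).
  rewrite mulrDr !mulrA mulfV ?gt_eqF // mul1r; nra.
by rewrite -(ler_pM2l t0).
Qed.

Lemma amgm_abs n (t : R) (x y : 'cV[C]_n) : 0 < t ->
  `|re2 x y| <= t * nr x + t^-1 * nr y.
Proof.
move=> t0; have h1 := amgm x y t0; have := amgm (- x) y t0.
rewrite re2N nrN => h2.
by rewrite ler_norml h1 andbT lerNl.
Qed.

End B.


Section Cc.
Variable R : realType.
Local Notation C := R[i].

Lemma re2_0l n (y : 'cV[C]_n) : re2 0 y = 0.
Proof. by rewrite /re2 ip0l ip0r addr0. Qed.
Lemma re2_0r n (y : 'cV[C]_n) : re2 y 0 = 0.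
Proof. by rewrite re2C re2_0l. Qed.

Lemma re2_nn n (z : 'cV[C]_n) : re2 z z = 2 * nr z.
Proof. by rewrite /re2 /nr /Nv cReD; lra. Qed.

Lemma nr_le0 n (x : 'cV[C]_n) : nr x <= 0 -> x = 0.
Proof. by move=> h; apply: nr_eq0; apply/eqP; rewrite eq_le h nr_ge0. Qed.

Lemma re2_bound n (x y v : 'cV[C]_n) (al be : R) :
  0 <= al -> 0 <= be -> nr x <= al ^+ 2 * nr v -> nr y <= be ^+ 2 * nr v ->
  `|re2 x y| <= 2 * al * be * nr v.
Proof.
move=> a0 b0 hx hy.
have nv0 := nr_ge0 v.
have [az0|az] := eqVneq al 0.
  have -> : x = 0 by apply: nr_le0; move: hx; rewrite az0 expr0n /= mul0r.
  by rewrite re2_0l normr0 !mulr_ge0.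
have [bz0|bz] := eqVneq be 0.
  have -> : y = 0 by apply: nr_le0; move: hy; rewrite bz0 expr0n /= mul0r.
  by rewrite re2_0r normr0 !mulr_ge0.
have ap : 0 < al by rewrite lt_def az.
have bp : 0 < be by rewrite lt_def bz.
have tp : 0 < be / al by rewrite divr_gt0.
apply: le_trans (amgm_abs x y tp) _.
rewrite invf_div.
have e1 : be / al * (al ^+ 2 * nr v) = al * be * nr v.
  by field; rewrite gt_eqF.
have e2 : al / be * (be ^+ 2 * nr v) = al * be * nr v.
  by field; rewrite gt_eqF.
have h1 : be / al * nr x <= be / al * (al ^+ 2 * nr v) by rewrite ler_pM2l.
have h2 : al / be * nr y <= al / be * (be ^+ 2 * nr v)
  by rewrite ler_pM2l // divr_gt0.
lra.
Qed.

Lemma polar n (A : 'M[C]_n) (h : R) : herm A -> 0 <= h ->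
  (forall v, `|qr A v| <= h * nr v) -> forall y, nr (A *m y) <= h ^+ 2 * nr y.
Proof.
move=> hA h0 hq y; set z := A *m y.
have key : forall x, qr A (x + y) - qr A (x - y) = 2 * re2 x z.
  move=> x; rewrite /qr /q /z !mulmxDr !mulmxN !ipDl !ipDr !ipNl !ipNr.
  have -> : ip y (A *m x) = ip (A *m y) x by rewrite ip_adj hA.
  rewrite /re2 !cReD !cReN; lra.
have main : forall t, 0 < t -> 4 * t * nr z <= 2 * h * (t ^+ 2 * nr z + nr y).
  move=> t t0; have := key (t%:C *: z).
  rewrite re2Zl re2_nn => e.
  have h1 := hq (t%:C *: z + y); have h2 := hq (t%:C *: z - y).
  rewrite nrD in h1; rewrite nrB in h2; rewrite nrZ re2Zl in h1 h2.
  have := ler_norml (qr A (t%:C *: z + y)) (h * (t ^+ 2 * nr z + nr y + t * re2 z y)).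
  rewrite h1 => /esym /andP [l1 u1].
  have := ler_norml (qr A (t%:C *: z - y)) (h * (t ^+ 2 * nr z + nr y - t * re2 z y)).
  rewrite h2 => /esym /andP [l2 u2].
  lra.
have nz0 := nr_ge0 z; have ny0 := nr_ge0 y.
have [h00|hp] := eqVneq h 0.
  have := main 1 ltr01; rewrite h00 mulr0 mul0r => H.
  rewrite expr0n /= mul0r; nra.
have hp' : 0 < h by rewrite lt_def hp.
have H := main h^-1 (ltac:(by rewrite invr_gt0)).
have e : 2 * h * (h^-1 ^+ 2 * nr z + nr y) = 2 * h^-1 * nr z + 2 * h * nr y.
  by field.
rewrite e in H.
have H2 : h * (4 * h^-1 * nr z) <= h * (2 * h^-1 * nr z + 2 * h * nr y).
  by rewrite ler_pM2l.
have e3 : h * (4 * h^-1 * nr z) = 4 * nr z by field.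
have e4 : h * (2 * h^-1 * nr z + 2 * h * nr y) = 2 * nr z + 2 * h ^+ 2 * nr y by field.
rewrite e3 e4 in H2; lra.
Qed.

End Cc.


Section D.
Variable R : realType.
Local Notation C := R[i].

Definition nc (c : C) : R := complex.Re (Num.conj c * c).

Lemma ncE (c : C) : nc c = complex.Re c ^+ 2 + complex.Im c ^+ 2.
Proof. by case: c => a b; rewrite /nc conjE /=; ring. Qed.

Lemma nc_ge0 c : 0 <= nc c.
Proof. by rewrite ncE addr_ge0 // sqr_ge0. Qed.

Lemma ncC (c : C) : Num.conj c * c = (nc c)%:C.
Proof. by apply: realCE; rewrite rmorphM /= conjCK mulrC. Qed.

Lemma nrZc n c (x : 'cV[C]_n) : nr (c *: x) = nc c * nr x.
Proof. by rewrite /nr /Nv ipZl ipZr mulrA ncC; case: (ip x x) => a b /=; rewrite mul0r subr0. Qed.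

Lemma nrE n (v : 'cV[C]_n) : nr v = \sum_k nc (v k 0).
Proof. by rewrite /nr /Nv ipE cRe_sum. Qed.

Lemma vnormE n (v : 'cV[C]_n) : vnorm v = Num.sqrt (nr v).
Proof. by rewrite /vnorm nrE; congr Num.sqrt; apply: eq_bigr => k _; rewrite ncE. Qed.

Lemma nc_le n (v : 'cV[C]_n) k : nc (v k 0) <= nr v.
Proof.
rewrite nrE (bigD1 k) //= lerDl; apply: sumr_ge0 => j _; exact: nc_ge0.
Qed.

Lemma re2_le n (x y : 'cV[C]_n) : re2 x y <= nr x + nr y.
Proof. by have := amgm x y ltr01; rewrite invr1 !mul1r. Qed.

Lemma nr_sum n (I : eqType) (s : seq I) (x : I -> 'cV[C]_n) :
  nr (\sum_(j <- s) x j) <= 2 ^+ size s * \sum_(j <- s) nr (x j).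
Proof.
elim: s => [|a s IH]; first by rewrite !big_nil /nr /Nv ip0l /= mul1r.
rewrite !big_cons /= nrD.
have h1 := re2_le (x a) (\sum_(j <- s) x j).
have h2 : 0 <= \sum_(j <- s) nr (x j) by apply: sumr_ge0 => j _; exact: nr_ge0.
have h3 : 1 <= 2 ^+ size s :> R by apply: exprn_ege1; lra.
have h4 := nr_ge0 (x a).
rewrite exprS; nra.
Qed.

Lemma mulmx_col_sum n (A : 'M[C]_n) (v : 'cV[C]_n) :
  A *m v = \sum_j v j 0 *: col j A.
Proof.
apply/matrixP=> i k; rewrite (ord1 k) !mxE summxE; apply: eq_bigr => j _.
by rewrite !mxE mulrC.
Qed.

Lemma crude n (A : 'M[C]_n) : exists K, 0 <= K /\ forall v, nr (A *m v) <= K * nr v.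
Proof.
exists (2 ^+ size (index_enum 'I_n) * \sum_j nr (col j A)); split.
  by apply: mulr_ge0; [apply: exprn_ge0; lra | apply: sumr_ge0 => j _; exact: nr_ge0].
move=> v; rewrite mulmx_col_sum; apply: le_trans (nr_sum _ _) _.
rewrite -mulrA ler_wpM2l //; first by apply: exprn_ge0; lra.
rewrite mulr_suml; apply: ler_sum => j _; rewrite nrZc mulrC ler_wpM2l //.
  exact: nr_ge0.
exact: nc_le.
Qed.

Lemma opnorm_bound n (A : 'M[C]_n) v :
  0 < nr v -> 0 <= opnorm A /\ nr (A *m v) <= opnorm A ^+ 2 * nr v.
Proof.
move=> vp.
pose E := [set vnorm (A *m w) | w in [set w : 'cV[C]_n | vnorm w = 1]]%classic.
have [K [K0 HK]] := crude A.
have ub : has_ubound E.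
  exists (Num.sqrt K) => y [w /= w1 <-].
  rewrite vnormE ler_sqrt //; apply: le_trans (HK w) _.
  have : nr w = 1.
    by move: w1; rewrite vnormE => h; rewrite -(sqr_sqrtr (nr_ge0 w)) h expr1n.
  by move=> ->; rewrite mulr1.
set c := Num.sqrt (nr v).
have c0 : 0 < c by rewrite sqrtr_gt0.
set w := (c^-1)%:C *: v.
have nw : nr w = 1.
  rewrite /w nrZ exprVn sqr_sqrtr ?mulVf ?gt_eqF //; exact: ltW.
have Ew : E (vnorm (A *m w)) by exists w => //=; rewrite vnormE nw sqrtr1.
have le := ub_le_sup ub Ew.
have ge0 : 0 <= vnorm (A *m w) by rewrite vnormE sqrtr_ge0.
have hs : 0 <= opnorm A := le_trans ge0 le.
split; first exact: hs.
have e : A *m w = (c^-1)%:C *: (A *m v) by rewrite /w scalemxAr.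
move: le; rewrite e vnormE nrZ => le.
have := le; rewrite -(ler_sqr (sqrtr_ge0 _) hs) sqr_sqrtr; last first.
  by apply: mulr_ge0; [exact: sqr_ge0| exact: nr_ge0].
rewrite /opnorm => h.
have ec : c ^+ 2 = nr v by rewrite sqr_sqrtr // ltW.
have : c ^+ 2 * (c^-1 ^+ 2 * nr (A *m v)) <= c ^+ 2 * (opnorm A ^+ 2).
  by rewrite ler_pM2l // exprn_gt0.
rewrite mulrA -exprMn mulfV ?gt_eqF // expr1n mul1r ec mulrC //.
Qed.

Lemma opnorm_le n (A : 'M[C]_n) v : nr (A *m v) <= opnorm A ^+ 2 * nr v.
Proof.
have [->|] := eqVneq v 0.
  rewrite mulmx0; have -> : nr (0 : 'cV[C]_n) = 0 by rewrite /nr /Nv ip0l.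
  by rewrite mulr0.
move=> vn0; have : 0 < nr v.
  rewrite lt_def nr_ge0 andbT; apply: contra vn0 => /eqP h; apply/eqP.
  exact: nr_eq0.
by move=> /(opnorm_bound A) [].
Qed.

End D.


Lemma lin_surj (F : fieldType) n (f : 'M[F]_n -> 'M[F]_n) :
  (forall c X Y, f (c *: X + Y) = c *: f X + f Y) ->
  (forall X, f X = 0 -> X = 0) -> forall B, exists X, f X = B.
Proof.
move=> lin inj B.
have f0 : f 0 = 0.
  have := lin 1 0 0; rewrite !scale1r addr0 => h.
  by apply: (@addrI _ (f 0)); rewrite addr0 -h.
have fZ : forall c X, f (c *: X) = c *: f X.
  by move=> c X; rewrite -[c *: X]addr0 lin f0 addr0.
have fD : forall X Y, f (X + Y) = f X + f Y.
  by move=> X Y; rewrite -[X in X + _]scale1r lin scale1r.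
have fsum : forall (s : seq 'I_(n * n)) (g : 'I_(n * n) -> 'M[F]_n),
    f (\sum_(i <- s) g i) = \sum_(i <- s) f (g i).
  move=> s g; elim: s => [|a s IH]; first by rewrite !big_nil.
  by rewrite !big_cons fD IH.
pose A : 'M[F]_(n * n) := \matrix_i mxvec (f (vec_mx (delta_mx 0 i))).
have key : forall u : 'rV_(n * n), u *m A = mxvec (f (vec_mx u)).
  move=> u; rewrite mulmx_sum_row {2}(row_sum_delta u) linear_sum /= fsum.
  rewrite linear_sum; apply: eq_bigr => i _.
  by rewrite rowK linearZ /= fZ linearZ.
have uA : A \in unitmx.
  rewrite -row_free_unit -kermx_eq0; apply/eqP/row_matrixP => i.
  rewrite row0; set r := row i (kermx A).
  have : r *m A = 0.
    by rewrite /r -row_mul mulmx_ker row0.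
  rewrite key => /eqP; rewrite mxvec_eq0 => /eqP /inj /eqP.
  by rewrite -mxvec_eq0 vec_mxK => /eqP.
exists (vec_mx (mxvec B *m invmx A)).
apply: (can_inj mxvecK); rewrite -key mulmxKV //.
Qed.


Lemma card_fiber (gT : finGroupType) a (to : {action gT &-> 'I_a}) (i0 i : 'I_a) :
  [transitive [set: gT], on [set: 'I_a] | to] ->
  #|[set g | to i0 g == i]| = #|[set g | to i0 g == i0]|.
Proof.
move=> tr; have [x _ ->] := atransP2 tr (finset.in_setT i0) (finset.in_setT i).
rewrite -(card_rcoset [set g | to i0 g == i0] x); apply: eq_card => g.
rewrite mem_rcoset !inE actM.
apply/eqP/eqP => [->|h]; first by rewrite actK.
by rewrite -[in RHS]h actKV.
Qed.

Lemma sum_orbit (gT : finGroupType) a (to : {action gT &-> 'I_a}) (i0 : 'I_a)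
  (V : nmodType) (F : 'I_a -> V) :
  [transitive [set: gT], on [set: 'I_a] | to] ->
  \sum_(g : gT) F (to i0 g) = \sum_i F i *+ #|[set g | to i0 g == i0]|.
Proof.
move=> tr; rewrite (partition_big (fun g => to i0 g) predT) //=.
apply: eq_bigr => i _.
rewrite (eq_bigr (fun=> F i)); last by move=> g /eqP ->.
rewrite sumr_const -(card_fiber i0 i tr); congr (_ *+ _).
by apply: eq_card => g; rewrite inE.
Qed.


Lemma iter_bound (R : realType) (Pr : R -> Prop) (tau delta h0 : R) :
  0 < delta -> (forall h h', Pr h -> h <= h' -> Pr h') ->
  (forall h, tau < h -> Pr h -> exists h', h' <= h - delta /\ Pr h') ->
  Pr h0 -> Pr tau.
Proof.
move=> d0 mono step P0.
suff H : forall k : nat, forall h, h <= tau + k%:R * delta -> Pr h -> Pr tau.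
  pose x := `|(h0 - tau) / delta|.
  have HH := H (Num.Def.archi_bound x) h0. apply: HH P0.
  have hx : x < (Num.Def.archi_bound x)%:R by apply: archi_boundP; exact: normr_ge0.
  have h1 : (h0 - tau) / delta <= x by apply: ler_norm.
  have h2 : (h0 - tau) <= x * delta.
    by rewrite -ler_pdivrMr.
  have h3 : x * delta <= (Num.Def.archi_bound x)%:R * delta.
    by rewrite ler_pM2r // ltW.
  lra.
elim=> [|k IH] h hk Ph.
  by apply: mono Ph _; move: hk; rewrite mul0r addr0.
have [hle|hgt] := leP h tau; first exact: mono Ph hle.
have [h' [h'le Ph']] := step h hgt Ph.
apply: (IH h') Ph'.
move: hk; rewrite -natr1 mulrDl mul1r; lra.
Qed.

Lemma le0_eps (R : realType) (x y : R) : 0 <= y ->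
  (forall e, 0 < e -> x <= e * y) -> x <= 0.
Proof.
move=> y0 H; apply/ler_addgt0Pr => e e0.
have [y00|yn] := eqVneq y 0.
  by have := H 1 ltr01; rewrite y00 mulr0 add0r => h; apply: le_trans h (ltW e0).
have yp : 0 < y by rewrite lt_def yn.
have := H (e / y) (divr_gt0 e0 yp).
by rewrite mulfVK ?gt_eqF // add0r.
Qed.


Section H.
Variable R : realType.
Local Notation C := R[i].

Lemma ip_sumr n (I : finType) (x : 'cV[C]_n) (F : I -> 'cV[C]_n) :
  ip x (\sum_i F i) = \sum_i ip x (F i).
Proof.
apply: (big_ind2 (fun u w => ip x u = w)); first by rewrite ip0r.
  by move=> ? ? ? ? <- <-; rewrite ipDr.
by [].
Qed.

Lemma qD n (A B : 'M[C]_n) v : q (A + B) v = q A v + q B v.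
Proof. by rewrite /q mulmxDl ipDr. Qed.
Lemma qN n (A : 'M[C]_n) v : q (- A) v = - q A v.
Proof. by rewrite /q mulNmx ipNr. Qed.
Lemma qB n (A B : 'M[C]_n) v : q (A - B) v = q A v - q B v.
Proof. by rewrite qD qN. Qed.
Lemma qZ n c (A : 'M[C]_n) v : q (c *: A) v = c * q A v.
Proof. by rewrite /q -scalemxAl ipZr. Qed.
Lemma q_sum n (I : finType) (F : I -> 'M[C]_n) v : q (\sum_i F i) v = \sum_i q (F i) v.
Proof. by rewrite /q mulmx_suml ip_sumr. Qed.
Lemma q1 n (v : 'cV[C]_n) : q 1%:M v = Nv v.
Proof. by rewrite /q mul1mx. Qed.
Lemma q_conj_mx n (A B : 'M[C]_n) v : q (adjmx B *m A *m B) v = q A (B *m v).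
Proof. by rewrite /q -!mulmxA ip_adj adjmxK. Qed.

Lemma qrD n (A B : 'M[C]_n) v : qr (A + B) v = qr A v + qr B v.
Proof. by rewrite /qr qD cReD. Qed.
Lemma qrN n (A : 'M[C]_n) v : qr (- A) v = - qr A v.
Proof. by rewrite /qr qN cReN. Qed.
Lemma qrB n (A B : 'M[C]_n) v : qr (A - B) v = qr A v - qr B v.
Proof. by rewrite qrD qrN. Qed.
Lemma qrZ n (r : R) (A : 'M[C]_n) v : qr (r%:C *: A) v = r * qr A v.
Proof. by rewrite /qr qZ cReMr. Qed.
Lemma qr_sum n (I : finType) (F : I -> 'M[C]_n) v : qr (\sum_i F i) v = \sum_i qr (F i) v.
Proof. by rewrite /qr q_sum cRe_sum. Qed.
Lemma qr1 n (v : 'cV[C]_n) : qr 1%:M v = nr v.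
Proof. by rewrite /qr q1. Qed.
Lemma qr_conj_mx n (A B : 'M[C]_n) v : qr (adjmx B *m A *m B) v = qr A (B *m v).
Proof. by rewrite /qr q_conj_mx. Qed.

Lemma qr_re2 n (A : 'M[C]_n) v : 2 * qr A v = re2 v (A *m v).
Proof.
rewrite /qr /re2 /q (ipC v (A *m v)) cReD.
by case: (ip v (A *m v)) => x y /=; lra.
Qed.

Lemma natC k : (k%:R : C) = (k%:R : R)%:C.
Proof. by rewrite rmorph_nat. Qed.

Definition Wop (gT : finGroupType) n (V : gT -> 'M[C]_n) (X : 'M[C]_n) :=
  \sum_(g : gT) adjmx (V g) *m X *m V g.

Lemma WD (gT : finGroupType) n (V : gT -> 'M[C]_n) X Y :
  Wop V (X + Y) = Wop V X + Wop V Y.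
Proof. by rewrite /Wop -big_split; apply: eq_bigr => g _; rewrite mulmxDr mulmxDl. Qed.
Lemma WN (gT : finGroupType) n (V : gT -> 'M[C]_n) X : Wop V (- X) = - Wop V X.
Proof. by rewrite /Wop -sumrN; apply: eq_bigr => g _; rewrite mulmxN mulNmx. Qed.
Lemma WB (gT : finGroupType) n (V : gT -> 'M[C]_n) X Y :
  Wop V (X - Y) = Wop V X - Wop V Y.
Proof. by rewrite WD WN. Qed.
Lemma WZ (gT : finGroupType) n (V : gT -> 'M[C]_n) c X :
  Wop V (c *: X) = c *: Wop V X.
Proof. by rewrite /Wop scaler_sumr; apply: eq_bigr => g _; rewrite -scalemxAr -scalemxAl. Qed.
Lemma W_adj (gT : finGroupType) n (V : gT -> 'M[C]_n) X :
  adjmx (Wop V X) = Wop V (adjmx X).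
Proof.
by rewrite /Wop adjmx_sum; apply: eq_bigr => g _; rewrite !adjmxM adjmxK mulmxA.
Qed.

Lemma W_inv (gT : finGroupType) n (V : gT -> 'M[C]_n) X :
  (forall g h, V (g * h)%g = V g *m V h) ->
  forall h, adjmx (V h) *m Wop V X *m V h = Wop V X.
Proof.
move=> VM h; rewrite /Wop mulmx_sumr mulmx_suml.
rewrite [RHS](reindex_inj (mulIg h)) /=; apply: eq_bigr => g _.
by rewrite VM adjmxM !mulmxA.
Qed.

Lemma W_const (gT : finGroupType) n (V : gT -> 'M[C]_n) Y :
  (forall g, adjmx (V g) *m Y *m V g = Y) -> Wop V Y = #|gT|%:R *: Y.
Proof.
move=> inY; rewrite /Wop (eq_bigr (fun=> Y)) ?sumr_const //.
by rewrite scaler_nat.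
Qed.

Lemma W_QY (gT : finGroupType) n (V : gT -> 'M[C]_n) Q Y :
  (forall g, V g *m adjmx (V g) = 1%:M) ->
  (forall g, adjmx (V g) *m Y *m V g = Y) ->
  Wop V (Q *m Y) = (\sum_g adjmx (V g) *m Q *m V g) *m Y.
Proof.
move=> uV inY; rewrite /Wop mulmx_suml; apply: eq_bigr => g _.
rewrite -{2}(inY g) !mulmxA -[adjmx (V g) *m Q *m V g *m adjmx (V g)]mulmxA uV mulmx1.
by [].
Qed.

Lemma W_YQ (gT : finGroupType) n (V : gT -> 'M[C]_n) Q Y :
  (forall g, V g *m adjmx (V g) = 1%:M) ->
  (forall g, adjmx (V g) *m Y *m V g = Y) ->
  Wop V (Y *m Q) = Y *m (\sum_g adjmx (V g) *m Q *m V g).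
Proof.
move=> uV inY; rewrite /Wop mulmx_sumr; apply: eq_bigr => g _.
rewrite -{2}(inY g) !mulmxA -[adjmx (V g) *m Y *m V g *m adjmx (V g)]mulmxA uV mulmx1.
by [].
Qed.

End H.


Section I.
Variable R : realType.
Local Notation C := R[i].

Lemma est_SZ n (S Z : 'M[C]_n) (s h : R) : herm S -> herm Z -> 0 <= s -> 0 <= h ->
  (forall v, nr (S *m v) <= s ^+ 2 * nr v) -> (forall v, `|qr Z v| <= h * nr v) ->
  forall v, `|qr (S *m Z + Z *m S) v| <= 2 * s * h * nr v.
Proof.
move=> hS hZ s0 h0 bS bZ v.
have e : qr (S *m Z + Z *m S) v = re2 (S *m v) (Z *m v).
  rewrite qrD /qr /q /re2 -!mulmxA ip_adj hS.
  by rewrite [ip v (Z *m _)]ip_adj hZ cReD.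
rewrite e; apply: re2_bound => //; exact: polar.
Qed.

Lemma qrS_le n (S : 'M[C]_n) (s : R) : 0 <= s ->
  (forall v, nr (S *m v) <= s ^+ 2 * nr v) -> forall v, qr S v <= s * nr v.
Proof.
move=> s0 bS v.
have := re2_bound (x := v) (y := S *m v) (v := v) ler01 s0.
rewrite expr1n mul1r => /(_ (lexx _) (bS v)).
rewrite -qr_re2 => h.
have := ler_norm (2 * qr S v); lra.
Qed.

Lemma Lw_init n (Z : 'M[C]_n) : exists h, 0 <= h /\ forall v, `|qr Z v| <= h * nr v.
Proof.
have [K [K0 HK]] := crude Z.
exists (Num.sqrt K); split; first exact: sqrtr_ge0.
move=> v.
have := re2_bound (x := v) (y := Z *m v) (v := v) ler01 (sqrtr_ge0 K).
rewrite expr1n mul1r sqr_sqrtr // => /(_ (lexx _) (HK v)).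
rewrite -qr_re2 normrM ger0_norm //; lra.
Qed.

Lemma mx_eq0 n (Z : 'M[C]_n) : (forall v : 'cV[C]_n, Z *m v = 0) -> Z = 0.
Proof.
move=> H; apply/matrixP => i j.
have := congr1 (fun M : 'cV[C]_n => M i 0) (H (delta_mx j 0)).
by rewrite -colE !mxE.
Qed.

Lemma solve_main n (Z S TZ : 'M[C]_n) (s m a b : R) :
  herm Z -> herm S -> 0 <= s -> 0 < m -> 0 < a -> 16 * s < a ->
  (forall v, nr (S *m v) <= s ^+ 2 * nr v) ->
  (forall h, 0 <= h -> (forall v, `|qr Z v| <= h * nr v) ->
     forall v, `|qr TZ v| <= h * (m * s) * nr v) ->
  (forall v, m * a * qr Z v = m * qr (S *m Z + Z *m S) v + b * m * qr S v - qr TZ v) ->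
  (b = 0 -> Z = 0) /\ (b = 1 -> forall v, - nr v <= qr Z v).
Proof.
move=> hZ hS s0 m0 a0 sa bS bT rel.
pose Pr h := 0 <= h /\ forall v, `|qr Z v| <= h * nr v.
have mono : forall h h', Pr h -> h <= h' -> Pr h'.
  move=> h h' [h0 H] hh; split; first exact: le_trans hh.
  move=> v; apply: le_trans (H v) _; apply: ler_wpM2r => //; exact: nr_ge0.
have step : forall h, Pr h -> Pr (s * (3 * h + `|b|) / a).
  move=> h [h0 H]; split.
    by apply: divr_ge0 (ltW a0); apply: mulr_ge0 => //; apply: addr_ge0;
      [apply: mulr_ge0 | exact: normr_ge0].
  move=> v; have nv := nr_ge0 v.
  have e1 := est_SZ hS hZ s0 h0 bS H v.
  have e2 := bT h h0 H v.
  have e3 := qrS_le s0 bS v.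
  have e3' : - (s * nr v) <= qr S v.
    have := est_SZ hS hS s0 s0 bS.
    have := qrS_le s0 bS v; move=> _ _.
    have := re2_bound (x := v) (y := S *m v) (v := v) ler01 s0.
    rewrite expr1n mul1r => /(_ (lexx _) (bS v)).
    rewrite -qr_re2 => hh; have := ler_norm (- (2 * qr S v)); rewrite normrN; lra.
  have r := rel v.
  have hb := ler_norm b; have hb' := ler_norm (- b); rewrite normrN in hb'.
  have key : m * a * `|qr Z v| <= m * (s * (3 * h + `|b|)) * nr v.
    rewrite -[X in X * `|_|]ger0_norm; last by apply: mulr_ge0; exact: ltW.
    rewrite -normrM r.
    set x1 := qr (S *m Z + Z *m S) v in e1 r *.
    set y := qr S v in e3 e3' r *.
    set x2 := qr TZ v in e2 r *.
    have : `|m * x1 + b * m * y - x2| <= m * `|x1| + `|b| * m * `|y| + `|x2|.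
      apply: le_trans (ler_normB _ _) _; rewrite lerD2r.
      apply: le_trans (ler_normD _ _) _.
      by rewrite !normrM (ger0_norm (ltW m0)) lexx.
    move=> hh; apply: le_trans hh _.
    have hy : `|y| <= s * nr v by rewrite ler_norml e3 andbT.
    have hbm : `|b| * m * `|y| <= `|b| * m * (s * nr v).
      by apply: ler_wpM2l => //; apply: mulr_ge0 => //; exact: ltW.
    have hm1 : m * `|x1| <= m * (2 * s * h * nr v) by rewrite ler_pM2l.
    have : m * (s * (3 * h + `|b|)) * nr v =
      m * (2 * s * h * nr v) + `|b| * m * (s * nr v) + h * (m * s) * nr v by ring.
    move=> ->; lra.
  have ma0 : 0 < m * a by apply: mulr_gt0.
  rewrite -(ler_pM2l ma0).
  have -> : m * a * (s * (3 * h + `|b|) / a * nr v) = m * (s * (3 * h + `|b|)) * nr v.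
    by field; rewrite gt_eqF.
  exact: key.
have [h0 [h00 Hh0]] := Lw_init Z.
split.
- move=> b0.
  have step0 : forall h, Pr h -> Pr (s * (3 * h) / a).
    by move=> h /step; rewrite b0 normr0 addr0.
  have Pe : forall e, 0 < e -> Pr e.
    move=> e e0; apply: (@iter_bound R Pr e (e / 2) h0) => //.
    + by apply: divr_gt0.
    + move=> h eh Ph; exists (s * (3 * h) / a); split; last exact: step0.
      have hp : 0 < h by apply: lt_trans eh.
      rewrite ler_pdivrMr //.
      have : s * (3 * h) * 16 <= a * (3 * h) by nra.
      nra.
  apply: mx_eq0 => v; apply: nr_le0.
  have hq : forall w, `|qr Z w| <= 0 * nr w.
    move=> w; rewrite mul0r; apply: le0_eps (nr_ge0 w) _ => e e0.
    by case: (Pe e e0) => _ /(_ w).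
  have := polar hZ (lexx 0) hq v; rewrite expr0n /= mul0r //.
- move=> b1.
  have step1 : forall h, Pr h -> Pr (s * (3 * h + 1) / a).
    by move=> h /step; rewrite b1 normr1.
  have P1 : Pr 1.
    apply: (@iter_bound R Pr 1 (1 / 2) h0) => //.
    + by rewrite divr_gt0.
    + move=> h h1 Ph; exists (s * (3 * h + 1) / a); split; last exact: step1.
      rewrite ler_pdivrMr //.
      have : s * (3 * h + 1) * 16 <= a * (3 * h + 1) by nra.
      nra.
  move=> v; case: P1 => _ /(_ v); rewrite mul1r => h.
  have := ler_norm (- qr Z v); rewrite normrN; lra.
Qed.

Lemma nr_proj n (Q : 'M[C]_n) w : herm Q -> Q *m Q = Q -> nr (Q *m w) = qr Q w.
Proof.
move=> hQ pQ; rewrite /nr /qr /Nv /q.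
by rewrite -{1}hQ -ip_adj mulmxA pQ.
Qed.

Lemma est_T (gT : finGroupType) n (V : gT -> 'M[C]_n) (Q Z : 'M[C]_n) (sig h : R) :
  herm Q -> Q *m Q = Q -> 0 <= h -> (forall v, `|qr Z v| <= h * nr v) ->
  (forall v, qr (\sum_g adjmx (V g) *m Q *m V g) v <= sig * nr v) ->
  forall v, `|qr (Wop V (Q *m Z *m Q)) v| <= h * sig * nr v.
Proof.
move=> hQ pQ h0 bZ bS v.
rewrite /Wop qr_sum.
apply: le_trans (ler_norm_sum _ _ _) _.
have e : forall g, qr (adjmx (V g) *m (Q *m Z *m Q) *m V g) v = qr Z (Q *m (V g *m v)).
  by move=> g; rewrite qr_conj_mx -{1}hQ qr_conj_mx.
rewrite (eq_bigr (fun g => `|qr Z (Q *m (V g *m v))|)); last by move=> g _; rewrite e.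
have H1 : \sum_g `|qr Z (Q *m (V g *m v))| <= \sum_g h * qr Q (V g *m v).
  by apply: ler_sum => g _; rewrite -(nr_proj _ hQ pQ); exact: bZ.
apply: le_trans H1 _.
rewrite -mulr_sumr -mulrA ler_wpM2l //.
have := bS v; rewrite qr_sum.
rewrite (eq_bigr (fun g => qr Q (V g *m v))) //.
by move=> g _; rewrite qr_conj_mx.
Qed.

End I.


Lemma socle_pos (F : fieldType) (gT : finGroupType) (G : {group gT}) n
   (rG : mx_representation F G n) (sG : socleType rG) :
  (0 < n)%N -> (0 < #|sG|)%N && (0 < \max_(W : sG) socle_mult W)%N.
Proof.
move=> npos.
have nz : (1%:M : 'M[F]_n) != 0.
  by rewrite -mxrank_eq0 mxrank1 -lt0n.
apply: (mxsimple_exists (mxmodule1 rG) nz) => -[V simV _].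
pose W : sG := PackSocle (component_socle sG simV).
apply/andP; split; first by apply/card_gt0P; exists W.
apply: (@leq_trans (socle_mult W)); last exact: leq_bigmax.
rewrite /socle_mult divn_gt0.
  by apply: mxrankS; apply: component_mx_id; exact: socle_simple.
have [_ nzb _] := socle_simple W.
by rewrite lt0n mxrank_eq0.
Qed.


Lemma qrMn (R : realType) n (A : 'M[R[i]]_n) k v : qr (A *+ k) v = k%:R * qr A v.
Proof. by rewrite -scaler_nat natC qrZ. Qed.

Lemma mulmxMnl (R : realType) n (A B : 'M[R[i]]_n) k : (A *+ k) *m B = (A *m B) *+ k.
Proof. by rewrite -[A *+ k]scaler_nat -[(A *m B) *+ k]scaler_nat -scalemxAl. Qed.
Lemma mulmxMnr (R : realType) n (A B : 'M[R[i]]_n) k : A *m (B *+ k) = (A *m B) *+ k.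
Proof. by rewrite -[B *+ k]scaler_nat -[(A *m B) *+ k]scaler_nat -scalemxAr. Qed.

Lemma adjmx_sumP (R : realType) n (I : finType) (Pp : pred I) (F : I -> 'M[R[i]]_n) :
  adjmx (\sum_(i | Pp i) F i) = \sum_(i | Pp i) adjmx (F i).
Proof.
apply: (big_ind2 (fun x y => adjmx x = y)); first exact: adjmx0.
  by move=> x1 x2 y1 y2 <- <-; rewrite adjmxD.
by [].
Qed.

Lemma q_sumP (R : realType) n (I : finType) (Pp : pred I) (F : I -> 'M[R[i]]_n) v :
  q (\sum_(i | Pp i) F i) v = \sum_(i | Pp i) q (F i) v.
Proof.
apply: (big_ind2 (fun x y => q x v = y)).
- by rewrite /q mul0mx ip0r.
- by move=> x1 x2 y1 y2 <- <-; rewrite qD.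
- by [].
Qed.

Theorem proposition5 (R : realType) (n a : nat) (P : 'I_a -> 'M[R[i]]_n)
  (gT : finGroupType) (to : {action gT &-> 'I_a})
  (U : mx_representation R[i] [set: gT]%G n) (sG : socleType U) :
  (forall i, orth_projector (P i)) ->
  [transitive [set: gT], on [set: 'I_a] | to] ->
  (forall g, unitary (U g)) ->
  (forall (i : 'I_a) (g : gT), P (to i g) = adjmx (U g) *m P i *m U g) ->
  let L := #|sG| in
  let M := (\max_(W : sG) socle_mult W)%N in
  ((16 * L ^ 6 * M ^ 9)%N%:R * opnorm (\sum_(i < a) P i) < (a%:R : R)) ->
  exists Rm : 'I_a -> 'M[R[i]]_n,
    POVM Rm /\ (forall i, P i *m Rm i = 0).
Proof.
move=> hP htr hU heq L M hyp.
have [n0|npos] := posnP n.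
  subst n.
  exists (fun _ => 0); split; last by move=> i; rewrite mulmx0.
  split.
    move=> i; split; first exact: adjmx0.
    by move=> v; rewrite mulmx0 mul0mx mxE.
  by rewrite big1 //; apply/matrixP => i; case: i.
set S := \sum_(i < a) P i.
set s := opnorm S.
have hS : forall v, nr (S *m v) <= s ^+ 2 * nr v := fun v => opnorm_le S v.
have s0 : 0 <= s.
  pose v1 : 'cV[R[i]]_n := const_mx 1.
  have : 0 < nr v1.
    apply: (lt_le_trans _ (nc_le v1 (Ordinal npos))).
    by rewrite mxE ncE /=; lra.
  by move=> /(opnorm_bound S) [].
have [Lpos Mpos] := andP (socle_pos sG npos).
have c16 : (16 <= 16 * L ^ 6 * M ^ 9)%N.
  rewrite -mulnA -{1}[16%N]muln1 leq_mul2l /= muln_gt0 !expn_gt0.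
  by rewrite /L /M Lpos Mpos.
have s16 : 16 * s < a%:R.
  apply: le_lt_trans hyp; rewrite ler_wpM2r //.
  by rewrite ler_nat.
have apos : (0 < a)%N.
  have : (0:R) < a%:R by apply: le_lt_trans s16; apply: mulr_ge0.
  by rewrite ltr0n.
pose i0 := Ordinal apos.
pose P0 := P i0.
have [hP0a hP0p] := hP i0.
pose K := 1%:M - P0.
have hK : herm K by rewrite /herm /K adjmxB adjmx1 hP0a.
have KE : K = 1%:M - P0 by [].
clearbody K.
have hSh : herm S.
  by rewrite /herm /S adjmx_sum; apply: eq_bigr => i _; case: (hP i).
pose V := fun g : gT => U g.
have VM : forall g h, V (g * h)%g = V g *m V h.
  by move=> g h; rewrite /V repr_mxM ?inE.
have uV : forall g, V g *m adjmx (V g) = 1%:M by move=> g; case: (hU g).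
have uV' : forall g, adjmx (V g) *m V g = 1%:M by move=> g; case: (hU g).
pose mm := #|[set g | to i0 g == i0]|.
have sumP : \sum_g adjmx (V g) *m P0 *m V g = S *+ mm.
  rewrite (eq_bigr (fun g => P (to i0 g))); last by move=> g _; rewrite heq.
  by rewrite (sum_orbit i0 _ htr) -sumrMnl.
have mpos : (0 < mm)%N by apply/card_gt0P; exists 1%g; rewrite inE act1.
have cardG : (#|gT|%:R : R) = mm%:R * a%:R.
  have := sum_orbit i0 (fun _ => (1 : R)) htr.
  rewrite !sumr_const card_ord -mulrnA natrM => <-.
  by [].
have SE : S = \sum_(i < a) P i by [].
clearbody s S.
have hK' : adjmx K = K := hK.
have hS' : adjmx S = S := hSh.
pose g := (#|gT|%:R : R[i]).
have gC : g = (#|gT|%:R : R)%:C by rewrite /g natC.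
have g0 : g != 0.
  by rewrite /g pnatr_eq0 -lt0n; apply/card_gt0P; exists 1%g.
have gE : g = #|gT|%:R by [].
clearbody g.
pose Phi := fun Y => Wop V (K *m Y *m K).
pose T := fun Y => Wop V (P0 *m Y *m P0).
pose Lam := fun Y => Wop V (K *m Y *m K - Y) + g *: Y.
have W0 : Wop V 0 = 0 by rewrite /Wop big1 // => h _; rewrite mulmx0 mul0mx.
have WW : forall X, Wop V (Wop V X) = g *: Wop V X.
  by move=> X; rewrite gE; apply: W_const; apply: W_inv.
have linLam : forall c X Y, Lam (c *: X + Y) = c *: Lam X + Lam Y.
  move=> c X Y; rewrite /Lam.
  have -> : K *m (c *: X + Y) *m K - (c *: X + Y) =
      c *: (K *m X *m K - X) + (K *m Y *m K - Y).
    by rewrite mulmxDr mulmxDl -scalemxAr -scalemxAl scalerBr opprD addrACA.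
  by rewrite WD WZ !scalerDr !scalerA [g * c]mulrC addrACA.
have PhiId : forall Y, (forall h, adjmx (V h) *m Y *m V h = Y) ->
    Phi Y = g *: Y - (S *m Y) *+ mm - (Y *m S) *+ mm + T Y.
  move=> Y inY; rewrite /Phi /T KE.
  have -> : (1%:M - P0) *m Y *m (1%:M - P0) = Y - P0 *m Y - Y *m P0 + P0 *m Y *m P0.
    by rewrite mulmxBl mul1mx mulmxBr mulmx1 mulmxBl opprB addrA addrAC.
  rewrite WD !WB (W_const inY) (W_QY _ uV inY) (W_YQ _ uV inY) sumP -gE.
  by rewrite mulmxMnl mulmxMnr.
have PhiD : forall X Y, Phi (X + Y) = Phi X + Phi Y.
  by move=> X Y; rewrite /Phi mulmxDr mulmxDl WD.
have PhiZ : forall c X, Phi (c *: X) = c *: Phi X.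
  by move=> c X; rewrite /Phi -scalemxAr -scalemxAl WZ.
have PhiN : forall X, Phi (- X) = - Phi X.
  by move=> X; rewrite -scaleN1r PhiZ scaleN1r.
have adjPhi : forall Y, adjmx (Phi Y) = Phi (adjmx Y).
  by move=> Y; rewrite /Phi W_adj !adjmxM hK' mulmxA.
have adjLam : forall Y, adjmx (Lam Y) = Lam (adjmx Y).
  move=> Y; rewrite /Lam adjmxD adjmxZ W_adj adjmxB !adjmxM hK' mulmxA.
  by rewrite gC conj_realC.
have inC_adj : forall Y, (forall h, adjmx (V h) *m Y *m V h = Y) ->
    (forall h, adjmx (V h) *m adjmx Y *m V h = adjmx Y).
  move=> Y inY h; have := congr1 (fun X => adjmx X) (inY h).
  by rewrite !adjmxM adjmxK mulmxA.
have qr0 : forall v, qr (0 : 'M[R[i]]_n) v = 0.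
  by move=> v; rewrite /qr /q mul0mx ip0r.
have qrS_m : forall v, qr (\sum_g adjmx (V g) *m P0 *m V g) v <= (mm%:R * s) * nr v.
  move=> v; rewrite sumP qrMn -mulrA ler_wpM2l ?ler0n //; exact: qrS_le.
have bT : forall (Z : 'M[R[i]]_n) h, 0 <= h -> (forall v, `|qr Z v| <= h * nr v) ->
    forall v, `|qr (T Z) v| <= h * (mm%:R * s) * nr v.
  by move=> Z h h0 bZ v; apply: (est_T hP0a hP0p h0 bZ qrS_m v).
have mR : (0 : R) < mm%:R by rewrite ltr0n.
have aR : (0 : R) < a%:R by rewrite ltr0n.
have ker0 : forall Y, adjmx Y = Y -> (forall h, adjmx (V h) *m Y *m V h = Y) ->
    Phi Y = 0 -> Y = 0.
  move=> Y hY inY P0Y.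
  have rel : forall v, mm%:R * a%:R * qr Y v =
      mm%:R * qr (S *m Y + Y *m S) v + 0 * mm%:R * qr S v - qr (T Y) v.
    move=> v; have := congr1 (fun X => qr X v) (PhiId Y inY).
    rewrite P0Y /= qr0 qrD !qrB gC qrZ !qrMn qrD cardG => e.
    lra.
  have := solve_main hY hSh s0 mR aR s16 hS (bT Y) rel.
  by case=> /(_ erefl).
have WLam : forall Y, Wop V (Lam Y) = g *: Phi Y.
  by move=> Y; rewrite /Lam /Phi WD WZ WW WB scalerBr subrK.
have Winv : forall X h, adjmx (V h) *m Wop V X *m V h = Wop V X.
  by move=> X h; apply: W_inv.
have inCLam : forall Y, Phi Y = Lam Y -> forall h, adjmx (V h) *m Y *m V h = Y.
  move=> Y e h.
  have WY : Wop V Y = g *: Y.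
    apply: (@addrI _ (Wop V (K *m Y *m K) - Wop V Y)); rewrite subrK -WB.
    exact: e.
  apply: (scalerI g0).
  by rewrite scalemxAl scalemxAr -WY Winv WY.
have Lam_inj : forall Y, Lam Y = 0 -> Y = 0.
  move=> Y LY.
  have PY : Phi Y = 0.
    by apply: (scalerI g0); rewrite -WLam LY W0 scaler0.
  have inY := inCLam Y (etrans PY (esym LY)).
  have inY' := inC_adj Y inY.
  have PY' : Phi (adjmx Y) = 0 by rewrite -adjPhi PY adjmx0.
  have e1 : Y + adjmx Y = 0.
    apply: ker0.
    - by rewrite adjmxD adjmxK addrC.
    - by move=> h; rewrite mulmxDr mulmxDl inY inY'.
    - by rewrite PhiD PY PY' addr0.
  have e2 : 'i *: (Y - adjmx Y) = 0.
    apply: ker0.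
    - by rewrite adjmxZ adjmxB adjmxK conjCi scaleNr -scalerN opprB.
    - by move=> h; rewrite -scalemxAr -scalemxAl mulmxBr mulmxBl inY inY'.
    - by rewrite PhiZ PhiD PhiN PY PY' subrr scaler0.
  move/eqP: e2; rewrite scaler_eq0 (negbTE (neq0Ci _)) /= subr_eq0 => /eqP e2.
  move: e1; rewrite -e2 => /eqP; rewrite -mulr2n -scaler_nat scaler_eq0.
  by rewrite pnatr_eq0 /= => /eqP.
pose B := (mm%:R : R[i]) *: (1%:M : 'M[R[i]]_n).
have [Y LY] : exists Y, Lam Y = B.
  exact: (lin_surj linLam Lam_inj).
have WB1 : Wop V B = g *: B.
  rewrite gE; apply: W_const => h.
  by rewrite /B -scalemxAr -scalemxAl mulmx1 uV'.
have PY : Phi Y = B.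
  by apply: (scalerI g0); rewrite -WLam LY WB1.
have inY := inCLam Y (etrans PY (esym LY)).
have hY : adjmx Y = Y.
  apply/eqP; rewrite -subr_eq0; apply/eqP; apply: Lam_inj.
  have L0 : Lam 0 = 0 by rewrite /Lam mulmx0 mul0mx subrr W0 scaler0 addr0.
  have LamN : forall Z, Lam (- Z) = - Lam Z.
    by move=> Z; have := linLam (-1) Z 0; rewrite !addr0 L0 addr0 !scaleN1r.
  have LamD : forall X Z, Lam (X + Z) = Lam X + Lam Z.
    by move=> X Z; have := linLam 1 X Z; rewrite !scale1r.
  rewrite LamD LamN -adjLam LY /B adjmxZ adjmx1 conjC_nat.
  by rewrite subrr.
pose Z := (a%:R : R)%:C *: Y - 1%:M.
have hZ : adjmx Z = Z by rewrite /Z adjmxB adjmxZ adjmx1 conj_realC hY.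
have TZ : T Z = (a%:R : R)%:C *: T Y - S *+ mm.
  rewrite /T /Z mulmxBr mulmxBl -scalemxAr -scalemxAl mulmx1 hP0p WB WZ.
  by rewrite -sumP.
have rel : forall v, mm%:R * a%:R * qr Z v =
    mm%:R * qr (S *m Z + Z *m S) v + 1 * mm%:R * qr S v - qr (T Z) v.
  move=> v.
  have eP := congr1 (fun X => qr X v) (PhiId Y inY).
  rewrite PY /B /= natC qrZ qr1 qrD !qrB gC qrZ !qrMn cardG in eP.
  have eZ : qr Z v = a%:R * qr Y v - nr v by rewrite /Z qrB qrZ qr1.
  have eSZ : qr (S *m Z + Z *m S) v =
      a%:R * qr (S *m Y) v - qr S v + (a%:R * qr (Y *m S) v - qr S v).
    by rewrite /Z mulmxBr mulmxBl -scalemxAr -scalemxAl mulmx1 mul1mx qrD !qrB !qrZ.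
  have eTZ : qr (T Z) v = a%:R * qr (T Y) v - mm%:R * qr S v.
    by rewrite TZ qrB qrZ qrMn.
  rewrite eZ eSZ eTZ.
  have eP' := congr1 (fun x => a%:R * x) eP.
  simpl in eP'.
  lra.
have psdY : forall v, 0 <= qr Y v.
  move=> v; have [_ H1] := solve_main hZ hSh s0 mR aR s16 hS (bT Z) rel.
  have := H1 erefl v; rewrite /Z qrB qrZ qr1 => h.
  have : 0 <= a%:R * qr Y v by lra.
  by rewrite pmulr_rge0.
have P0K : P0 *m K = 0 by rewrite KE mulmxBr mulmx1 hP0p subrr.
pose Rm := fun i : 'I_a => (mm%:R : R[i])^-1 *:
  \sum_(h | to i0 h == i) (adjmx (V h) *m (K *m Y *m K) *m V h).
exists Rm; split; last first.
  move=> i; rewrite /Rm -scalemxAr mulmx_sumr big1 ?scaler0 // => h /eqP hi.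
  rewrite -hi heq -/P0 !mulmxA.
  rewrite -[adjmx (V h) *m P0 *m V h *m adjmx (V h)]mulmxA uV mulmx1.
  by rewrite -[adjmx (V h) *m P0 *m K]mulmxA P0K mulmx0 !mul0mx.
have mC0 : (mm%:R : R[i]) != 0 by rewrite pnatr_eq0 -lt0n.
split.
  move=> i; split.
    rewrite /Rm adjmxZ adjmx_sumP fmorphV rmorph_nat; congr (_ *: _).
    apply: eq_bigr => h _.
    by rewrite !adjmxM adjmxK hK' hY !mulmxA.
  move=> v; rewrite -mulmxA -/(ip v _) -/(q _ v) /Rm qZ q_sumP.
  apply: mulr_ge0; first by rewrite invr_ge0 ler0n.
  apply: sumr_ge0 => h _.
  rewrite q_conj_mx -{1}hK' q_conj_mx qE // lecR; exact: psdY.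
have part : \sum_h (adjmx (V h) *m (K *m Y *m K) *m V h) =
    \sum_i \sum_(h | to i0 h == i) (adjmx (V h) *m (K *m Y *m K) *m V h).
  by rewrite (partition_big (fun h => to i0 h) predT).
rewrite /Rm -scaler_sumr -part.
have -> : \sum_h (adjmx (V h) *m (K *m Y *m K) *m V h) = B by exact: PY.
by rewrite /B scalerA mulVf // scale1r.
Qed.
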